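(* Let $b\in\mathbb{N}\setminus\{1\}$, $\phi:\mathbb{R}\to\mathbb{R}$ periodic with period $1$, vanishing on $\mathbb{Z}$, and H\''older continuous with exponent $\gamma\in(0,1]$, and $\psi:(0,\infty)\to(0,\infty)$ submultiplicative with $\psi(b^{-1})\in(0,1)$ and $\psi(b^{-1})>b^{-\gamma}$. Fix a sign $\sigma\in\{+1,-1\}$ (corresponding to $f(t)=\sum_{m=0}^\infty\sigma\,\psi(b^{-m})\phi(b^mt)$, i.e. $\xi_m=\sigma$ for all $m$), and let $Z_n:=\sum_{m=1}^n(\sigma\psi(b^{-1})b)^{-m}Y_m$, $n\in\mathbb{N}$. Then the series $Z:=\sum_{m=1}^\infty(\sigma\psi(b^{-1})b)^{-m}Y_m$ is well-defined (converges almost surely), and for every $p>0$ the family $\{|Z_n|^p:n\in\mathbb{N}\}$ is uniformly integrable and $\mathbb{E}(|Z_n|^p)\to\mathbb{E}(|Z|^p)$ as $n\to\infty$.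
   Context: $\psi$ submultiplicative: $\psi(xy)\le\psi(x)\psi(y)$ for $x,y>0$. For $m\in\mathbb{N}$, $k\in\{0,\dots,b^m-1\}$ let $\lambda_{m,k}:=b^m(\phi((k+1)b^{-m})-\phi(kb^{-m}))$. Let $(U_n)_{n\in\mathbb{N}}$ be i.i.d. uniform on $\{0,\dots,b-1\}$, $R_m:=\sum_{i=1}^mU_ib^{i-1}$, $Y_m:=\lambda_{m,R_m}$. *)

(* Defs.v *)
From HB Require Import structures.
From mathcomp Require Import all_boot all_order all_algebra.
From mathcomp Require Import all_classical all_reals all_analysis.
Set Implicit Arguments. Unset Strict Implicit. Unset Printing Implicit Defensive.
Import Order.TTheory GRing.Theory Num.Theory.
Import numFieldNormedType.Exports.
Local Open Scope classical_set_scope.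
Local Open Scope ring_scope.

Definition lam {R : realType} (b : nat) (phi : R -> R) (m k : nat) : R :=
  (b%:R ^+ m) * (phi (k.+1%:R / b%:R ^+ m) - phi (k%:R / b%:R ^+ m)).

Definition Rdig {T : Type} (b : nat) (U : nat -> T -> nat) (m : nat) (x : T) : nat :=
  (\sum_(1 <= i < m.+1) U i x * b ^ (i.-1))%N.

Definition Yrv {R : realType} {T : Type} (b : nat) (phi : R -> R)
  (U : nat -> T -> nat) (m : nat) (x : T) : R := lam b phi m (Rdig b U m x).

Definition Zn {R : realType} {T : Type} (b : nat) (phi psi : R -> R) (sigma : R)
  (U : nat -> T -> nat) (n : nat) (x : T) : R :=
  \sum_(1 <= m < n.+1) (sigma * psi (b%:R)^-1 * b%:R) ^- m * Yrv b phi U m x.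

Definition discrete_mutual_indep {d : measure_display} {T : measurableType d}
  {R : realType} (P : probability T R) (U : nat -> T -> nat) : Prop :=
  (forall i k, measurable [set x | U i x = k]) /\
  forall (s : seq nat) (k : nat -> nat), uniq s ->
    P (\bigcap_(i in [set` s]) [set x | U i x = k i]) =
    (\prod_(i <- s) P [set x | U i x = k i])%E.

Definition uniform_digit {d : measure_display} {T : measurableType d}
  {R : realType} (P : probability T R) (b : nat) (V : T -> nat) : Prop :=
  forall k, (k < b)%N -> P [set x | V x = k] = (b%:R^-1)%:E.

Local Open Scope ereal_scope.
Definition unif_integrable {d : measure_display} {T : measurableType d}
  {R : realType} (P : probability T R) (X : nat -> T -> R) : Prop :=
  (fun K : R => ereal_sup [set \int[P]_(x in [set x | (K < `|X n x|)%R])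
                                   (`|X n x|)%:E | n in [set: nat]])
    @ +oo%R --> 0.

(* Main.v *)
Require Import Defs.
From HB Require Import structures.
From mathcomp Require Import all_boot all_order all_algebra.
From mathcomp Require Import all_classical all_reals all_analysis.
From mathcomp Require Import measurable_realfun.
From mathcomp Require Import ring lra.
Import Order.TTheory GRing.Theory Num.Theory.
Import numFieldNormedType.Exports.
Local Open Scope classical_set_scope.
Local Open Scope ring_scope.
Section Meas.
Context {d : measure_display} {T : measurableType d} {R : realType}.

Definition dmeas (h : T -> nat) := forall k, measurable [set x | h x = k].

Lemma dmeas_comp (h : T -> nat) (g : nat -> R) : dmeas h ->
  measurable_fun setT (fun x => g (h x)).
Proof.
move=> hk _ A mA; rewrite setTI.
have -> : (fun x => g (h x)) @^-1` A =
  \bigcup_k (if pselect (A (g k)) then [set x | h x = k] else set0).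
  apply/seteqP; split => x /=.
    move=> Ax; exists (h x) => //; case: pselect => //.
  by move=> [k _]; case: pselect => // Agk /= ->.
by apply: bigcupT_measurable => k; case: (pselect (A (g k))) => Hk /=; [exact: hk|exact: measurable0].
Qed.

Lemma dmeas_op (h f : T -> nat) (G : nat -> nat -> nat) :
  dmeas h -> dmeas f -> dmeas (fun x => G (h x) (f x)).
Proof.
move=> mh mf k.
have -> : [set x | G (h x) (f x) = k] =
  \bigcup_i \bigcup_j (if pselect (G i j = k) then
     [set x | h x = i] `&` [set x | f x = j] else set0).
  apply/seteqP; split => x /=.
    move=> Hx; exists (h x) => //; exists (f x) => //; case: pselect => //.
  by move=> [i _ [j _]]; case: pselect => //= Gij [-> ->].
apply: bigcupT_measurable => i; apply: bigcupT_measurable => j.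
by case: (pselect (G i j = k)) => Hk /=; [exact: measurableI|exact: measurable0].
Qed.

Lemma dmeas_cst (c : nat) : dmeas (fun _ => c).
Proof.
move=> k; case: (eqVneq c k) => [->|ck].
  by rewrite (_ : [set _ | _] = setT) //; apply/seteqP; split.
by rewrite (_ : [set _ | _] = set0) //; apply/seteqP; split => x //= /eqP; rewrite (negbTE ck).
Qed.

Lemma dmeas_Rdig b (U : nat -> T -> nat) : (forall i, dmeas (U i)) ->
  forall m, dmeas (Rdig b U m).
Proof.
move=> mU; elim=> [|m IH].
  rewrite /Rdig (_ : (fun x => _) = fun _ => 0%N); first exact: dmeas_cst.
  by apply/funext => x; rewrite big_geq.
rewrite /Rdig (_ : (fun x => _) = fun x => (Rdig b U m x + U m.+1 x * b ^ m)%N).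
  exact: (dmeas_op (Rdig b U m) (U m.+1) (fun a c => (a + c * b ^ m)%N) IH (mU m.+1)).
by apply/funext => x; rewrite big_nat_recr.
Qed.
End Meas.

Lemma term_bound (R : realType) b (phi : R -> R) (psi1 gamma sigma C : R) m k :
  (2 <= b)%N -> 0 < gamma ->
  (forall s t, `|phi s - phi t| <= C * `|s - t| `^ gamma) -> 0 < psi1 ->
  (sigma = 1 \/ sigma = -1) ->
  `| (sigma * psi1 * b%:R) ^- m * lam b phi m k | <=
    `|C| * (b%:R `^ (- gamma) / psi1) ^+ m.
Proof.
move=> b2 g0 hC p0 hs.
set bb : R := b%:R.
have bb0 : 0 < bb by rewrite /bb ltr0n; apply: leq_trans b2.
have hd : k.+1%:R / bb ^+ m - k%:R / bb ^+ m = (bb ^+ m)^-1.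
  by rewrite -mulrBl -natrB // subSnn mul1r.
have hp : ((bb ^+ m)^-1) `^ gamma = (bb `^ (- gamma)) ^+ m.
  rewrite -powR_inv1; last exact: exprn_ge0 (ltW bb0).
  rewrite -powRrM mulN1r.
  have e1 : bb ^+ m = bb `^ m%:R by rewrite powR_mulrn // ltW.
  by rewrite e1 powRAC powR_mulrn // powR_ge0.
have hl : `|lam b phi m k| <= bb ^+ m * (`|C| * (bb `^ (- gamma)) ^+ m).
  rewrite /lam normrM ger0_norm; last exact: exprn_ge0 (ltW bb0).
  apply: ler_wpM2l; first exact: exprn_ge0 (ltW bb0).
  apply: (le_trans (hC _ _)); rewrite hd ger0_norm; last first.
    by rewrite invr_ge0 exprn_ge0 // ltW.
  by rewrite hp ler_wpM2r ?exprn_ge0 ?powR_ge0 // ler_norm.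
have hn : `|(sigma * psi1 * bb) ^- m| = ((psi1 * bb) ^+ m)^-1.
  rewrite normfV normrX; congr (_ ^+ _)^-1.
  rewrite -mulrA normrM; case: hs => ->; rewrite ?normrN normr1 mul1r;
  by rewrite ger0_norm // mulr_ge0 // ltW.
rewrite normrM hn.
apply: (le_trans (ler_wpM2l _ hl)); first by rewrite invr_ge0 exprn_ge0 // mulr_ge0 // ltW.
rewrite exprMn expr_div_n.
set A := psi1 ^+ m; set B := bb ^+ m.
have A0 : A != 0 by rewrite expf_neq0 // gt_eqF.
have B0 : B != 0 by rewrite expf_neq0 // gt_eqF.
rewrite le_eqVlt; apply/orP; left; apply/eqP; field.
by rewrite A0 B0.
Qed.

Lemma powR_cvg_seq (R : realType) (u : nat -> R) l p : 0 < p ->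
  (forall n, 0 <= u n) -> u @ \oo --> l -> (fun n => u n `^ p) @ \oo --> l `^ p.
Proof.
move=> p0 u0 ul.
have l0 : 0 <= l.
  have <- := cvg_lim (@Rhausdorff R) ul.
  apply: limr_ge; first by apply/cvg_ex; exists l.
  by apply: nearW.
case: (ltgtP 0 l) l0 => // [lp _|l00 _]; last rewrite -l00 in ul *.
  apply: (@continuous_cvg _ _ _ _ _ u (fun a => a `^ p)) => //.
  apply: differentiable_continuous; apply/derivable1_diffP.
  by apply: derivable_powR; rewrite in_itv /= andbT.
rewrite powR0 ?gt_eqF //.
apply/cvgr0Pnorm_lt => e e0.
have ep : 0 < e `^ p^-1 by apply: powR_gt0.
have := (@cvgr0Pnorm_lt _ _ _ _ _ u).1 ul _ ep.

move=> /(_ eventually_filter) H; near=> n.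
rewrite ger0_norm ?powR_ge0 //.
have -> : e = (e `^ p^-1) `^ p by rewrite -powRrM mulVf ?powRr1 ?gt_eqF // ltW.
apply: gt0_ltr_powR => //; rewrite ?nnegrE ?powR_ge0 //.
by rewrite -(ger0_norm (u0 n)); near: n; exact: H.
Unshelve. all: by end_near. Qed.

Theorem lemma3p1 (R : realType) (d : measure_display) (T : measurableType d)
  (P : probability T R) (b : nat) (phi psi : R -> R) (gamma sigma : R)
  (U : nat -> T -> nat) :
  (2 <= b)%N ->
  (forall t, phi (t + 1) = phi t) ->
  (forall z : int, phi z%:~R = 0) ->
  0 < gamma -> gamma <= 1 ->
  (exists C : R, forall s t, `|phi s - phi t| <= C * `|s - t| `^ gamma) ->
  (forall x, 0 < x -> 0 < psi x) ->
  (forall x y, 0 < x -> 0 < y -> psi (x * y) <= psi x * psi y) ->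
  0 < psi (b%:R)^-1 -> psi (b%:R)^-1 < 1 ->
  b%:R `^ (- gamma) < psi (b%:R)^-1 ->
  (sigma = 1 \/ sigma = -1) ->
  discrete_mutual_indep P U ->
  (forall i, uniform_digit P b (U i)) ->
  let Z := fun x => limn (fun n => Zn b phi psi sigma U n x) in
  {ae P, forall x, cvgn (fun n => Zn b phi psi sigma U n x)} /\
  forall p : R, 0 < p ->
    unif_integrable P (fun n x => `|Zn b phi psi sigma U n x| `^ p) /\
    (fun n => (\int[P]_x (`|Zn b phi psi sigma U n x| `^ p)%:E)%E) @ \oo -->
      (\int[P]_x (`|Z x| `^ p)%:E)%E.
Proof.
move=> b2 _ _ g0 _ [C hC] _ _ p0 _ hbg hs [mU _] _ Z.
have bb0 : 0 < (b%:R : R) by rewrite ltr0n; apply: leq_trans b2.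
pose q := (b%:R : R) `^ (- gamma) / psi (b%:R)^-1.
have q0 : 0 < q by rewrite divr_gt0 // powR_gt0.
have q1 : q < 1 by rewrite ltr_pdivrMr // mul1r.
pose a := fun m x => (sigma * psi (b%:R)^-1 * b%:R) ^- m * Yrv b phi U m x.
have ha m x : `|a m x| <= `|C| * q ^+ m by apply: term_bound.
have hZ n x : Zn b phi psi sigma U n x = series (fun k => a k.+1 x) n.
  by rewrite /Zn seriesEnat /= big_add1.
pose B := `|C| * q / (1 - q).
have B0 : 0 <= B by apply: divr_ge0; [apply: mulr_ge0 => //; exact: ltW | rewrite subr_ge0; exact: ltW].
have hB n x : `|Zn b phi psi sigma U n x| <= B.
  rewrite hZ seriesEnat /=.
  apply: (le_trans (ler_norm_sum _ _ _)).
  apply: (@le_trans _ _ (series (geometric (`|C| * q) q) n)); last first.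
    apply: geometric_le_lim; [by apply: mulr_ge0 => //; exact: ltW | exact: q0 | by rewrite ger0_norm // ltW].
  rewrite seriesEnat /=; apply: ler_sum => k _; rewrite /geometric -mulrA -exprS.
  exact: ha.
have hcv x : cvgn (fun n => Zn b phi psi sigma U n x).
  rewrite (_ : (fun n => _) = series (fun k => a k.+1 x)); last first.
    by apply/funext => n; exact: hZ.
  apply: normed_cvg.
  apply: (@series_le_cvg _ _ (geometric (`|C| * q) q)) => //.
  - by move=> n /=.
  - move=> n; rewrite /geometric; apply: mulr_ge0; [apply: mulr_ge0 => //; exact: ltW | apply: exprn_ge0; exact: ltW].
  - move=> n /=; rewrite /geometric -mulrA -exprS; exact: ha.
  - by apply: is_cvg_geometric_series; rewrite ger0_norm // ltW.
split; first exact: aeW.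
move=> p pp.
have hXB n x : `|Zn b phi psi sigma U n x| `^ p <= B `^ p.
  by apply: ge0_ler_powR; rewrite ?nnegrE ?(ltW pp) ?normr_ge0.
split.
  rewrite /unif_integrable; apply: cvg_near_cst; near=> K => /=.
  have hK : B `^ p < K by near: K; apply: nbhs_pinfty_gt; rewrite num_real.
  have E n : [set x | (K < `| `|Zn b phi psi sigma U n x| `^ p |)%R] = set0.
    apply/seteqP; split => x //=; rewrite ger0_norm ?powR_ge0 // => hx.
    by have := lt_trans (lt_le_trans hx (hXB n x)) hK; rewrite ltxx.
  rewrite (_ : [set _ | n in _] = [set 0%E]) ?ereal_sup1 //.
  apply/seteqP; split => y /=.
    by move=> [n _ <-]; rewrite E integral_set0.
  by move=> ->; exists 0%N => //; rewrite E integral_set0.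
have mZn n : measurable_fun setT (Zn b phi psi sigma U n).
  rewrite /Zn; apply: measurable_sum => m; rewrite /Yrv.
  exact: (dmeas_comp (Rdig b U m)
    (fun k => (sigma * psi (b%:R)^-1 * b%:R) ^- m * lam b phi m k)
    (dmeas_Rdig b U mU m)).
have mX n : measurable_fun setT (fun x => `|Zn b phi psi sigma U n x| `^ p).
  have h1 := measurableT_comp (@normr_measurable _ setT) (mZn n).
  exact: (measurableT_comp (measurable_powR p) h1).
have cX x : (fun n => `|Zn b phi psi sigma U n x| `^ p) @ \oo --> `|Z x| `^ p.
  by apply: powR_cvg_seq => //; apply: cvg_norm; exact: hcv x.
have DC := @dominated_convergence _ _ _ P setT measurableT
  (fun n x => (`|Zn b phi psi sigma U n x| `^ p)%:E)
  (fun x => (`|Z x| `^ p)%:E) (fun _ => (B `^ p)%:E).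
have [|||||_ _ H] := DC; last exact: H.
- by move=> n; apply/measurable_EFinP; exact: mX.
- apply/measurable_EFinP.
  exact: (measurable_fun_cvg (h := fun n x => `|Zn b phi psi sigma U n x| `^ p)).
- apply: aeW => x _; apply: cvg_EFin; last exact: cX x.
  by apply: nearW.
- exact: finite_measure_integrable_cst.
- apply: aeW => x n _ /=; rewrite lee_fin ger0_norm ?powR_ge0 //.
Unshelve. all: by end_near. Qed.
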